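(* Let $z,z'\in\mathbb C\setminus\mathbb Z$ with $t=zz'\notin\{0,-1,-2,\dots\}$, and let $M_{zz'}$ be defined by $$M_{zz'}(\lambda)=\frac{\prod_{(i,j)\in\lambda}(z+j-i)(z'+j-i)}{(t)_{|\lambda|}}\cdot\frac{(\dim\lambda)^2}{|\lambda|!},\qquad M_{zz'}(\varnothing)=1 .$$ Then $M_{zz'}(\lambda)\neq0$ for every Young diagram $\lambda$. Moreover, $M_{zz'}(\lambda)>0$ for all Young diagrams $\lambda$ if and only if one of the following holds: (i) $z'=\bar z$ (and $z\notin\mathbb Z$); (ii) $z,z'$ are real and both lie in one open interval $(m,m+1)$ with $m\in\mathbb Z$.
   Context: Young diagrams are identified with partitions; $|\lambda|$ is the number of boxes and $(i,j)\in\lambda$ denotes the box in row $i$, column $j$. $\dim\lambda$ is the number of standard Young tableaux of shape $\lambda$. $(t)_n=t(t+1)\cdots(t+n-1)$. *)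

(* Defs.v *)
From HB Require Import structures.
From mathcomp Require Import all_boot all_order all_algebra.
From mathcomp Require Import reals.
From mathcomp Require Import complex.
Set Implicit Arguments. Unset Strict Implicit. Unset Printing Implicit Defensive.
Import Order.TTheory GRing.Theory Num.Theory.
Local Open Scope ring_scope.

Definition is_partition (la : seq nat) : bool :=
  sorted (fun a b => (b <= a)%N) la && all (fun x => (0 < x)%N) la.

Definition size_part (la : seq nat) : nat := sumn la.

(* box (i,j) (0-indexed row i, column j) belongs to la *)
Definition in_diagram (la : seq nat) (b : nat * nat) : bool :=
  (b.1 < size la)%N && (b.2 < nth 0%N la b.1)%N.

(* A standard Young tableau of shape la, encoded by f : k |-> box containing
   entry k+1, for k < |la|: f is injective with image inside the diagram
   (hence a bijection onto the boxes), and entries increase weakly-NW to SE: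
   if box f k is weakly north-west of box f l then k <= l. *)
Definition is_SYT (la : seq nat)
  (f : {ffun 'I_(size_part la) -> 'I_(size_part la) * 'I_(size_part la)}) : bool :=
  [forall k, in_diagram la (nat_of_ord (f k).1, nat_of_ord (f k).2)]
  && injectiveb f
  && [forall k, forall l,
        (((f k).1 <= (f l).1)%N && ((f k).2 <= (f l).2)%N) ==> (k <= l)%N].

Arguments is_SYT : clear implicits.

Definition dim_part (la : seq nat) : nat := #|[pred f | is_SYT la f]|.

Definition poch {F : ringType} (t : F) (n : nat) : F :=
  \prod_(k < n) (t + k%:R).

Definition Mzz {F : fieldType} (z z' : F) (la : seq nat) : F :=
  (\prod_(i < size la) \prod_(j < nth 0%N la i)
      ((z + j%:R - i%:R) * (z' + j%:R - i%:R)))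
  / poch (z * z') (size_part la)
  * ((dim_part la) ^ 2)%:R / ((size_part la)`!)%:R.

Definition is_integer {F : ringType} (x : F) : Prop := exists k : int, x = k%:~R.

(* Main.v *)
Require Import Defs.
From HB Require Import structures.
From mathcomp Require Import all_boot all_order all_algebra.
From mathcomp Require Import reals.
From mathcomp Require Import complex.
From mathcomp Require Import ring lra.
Import Order.TTheory GRing.Theory Num.Theory.
Set Implicit Arguments. Unset Strict Implicit. Unset Printing Implicit Defensive.

Section P1.
Fixpoint box_of (la : seq nat) (k : nat) : nat * nat :=
  match la with
  | [::] => (0%N, k)
  | a :: l => if (k < a)%N then (0%N, k)
              else let p := box_of l (k - a) in (p.1.+1, p.2)
  end.

Lemma box_of_in la k : (k < sumn la)%N ->
  ((box_of la k).1 < size la)%N /\ ((box_of la k).2 < nth 0%N la (box_of la k).1)%N.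
Proof.
elim: la k => [|a l IH] k //= Hk.
case: ifP => Hka /=; first by [].
have Hk' : (k - a < sumn l)%N by rewrite ltn_subLR // leqNgt Hka.
by case: (IH _ Hk').
Qed.

Lemma box_of_idx la k : (k < sumn la)%N ->
  (sumn (take (box_of la k).1 la) + (box_of la k).2)%N = k.
Proof.
elim: la k => [|a l IH] k //= Hk.
case: ifP => Hka /=; first by [].
have Hk' : (k - a < sumn l)%N by rewrite ltn_subLR // leqNgt Hka.
rewrite -addnA IH //. by rewrite subnKC // leqNgt Hka.
Qed.

Lemma idx_mono la r c r' c' : (r < size la)%N -> (c < nth 0%N la r)%N -> (r < r')%N ->
  (sumn (take r la) + c < sumn (take r' la) + c')%N.
Proof.
elim: la r r' => [|a l IH] r r' //= Hr Hc Hrr'.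
case: r' Hrr' => [|s] // Hrs /=.
case: r Hr Hc Hrs => [|q] /= Hr Hc Hrs.
  by rewrite add0n -addnA; apply: (leq_trans Hc); rewrite leq_addr.
rewrite -!addnA ltn_add2l; exact: IH.
Qed.

Lemma size_le_sumn la : all (fun x => (0 < x)%N) la -> (size la <= sumn la)%N.
Proof.
elim: la => [|a l IH] //= /andP [Ha Hl].
by rewrite -add1n leq_add // IH.
Qed.

Lemma dim_part_gt0 la : is_partition la -> (0 < dim_part la)%N.
Proof.
move=> /andP [_ Hpos].
rewrite /dim_part.
set n := size_part la.
have Hn : n = sumn la by [].
pose f : {ffun 'I_n -> 'I_n * 'I_n} :=
  [ffun k : 'I_n => (insubd k (box_of la k).1, insubd k (box_of la k).2)].
have Hin : forall k : 'I_n, ((box_of la k).1 < size la)%N /\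
    ((box_of la k).2 < nth 0%N la (box_of la k).1)%N.
  by move=> k; apply: box_of_in; rewrite -Hn.
have Hidx : forall k : 'I_n, (sumn (take (box_of la k).1 la) + (box_of la k).2)%N = k.
  by move=> k; apply: box_of_idx; rewrite -Hn.
have Hf1 : forall k, nat_of_ord (f k).1 = (box_of la k).1.
  move=> k; rewrite ffunE /= val_insubd; case: ifP => // /negbT; rewrite -leqNgt.
  move=> H; exfalso; have [H1 _] := Hin k.
  have := size_le_sumn Hpos; rewrite -Hn => H2.
  have := leq_trans H1 H2. by rewrite ltnNge H.
have Hf2 : forall k, nat_of_ord (f k).2 = (box_of la k).2.
  move=> k; rewrite ffunE /= val_insubd; case: ifP => // /negbT; rewrite -leqNgt.
  move=> H; exfalso. have := ltn_ord k. rewrite -(Hidx k) ltnNge.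
  by rewrite (leq_trans H) // leq_addl.
apply/card_gt0P; exists f; rewrite inE /is_SYT.
apply/andP; split; first (apply/andP; split).
- apply/forallP => k; rewrite /in_diagram /= Hf1 Hf2.
  by have [-> ->] := Hin k.
- apply/injectiveP => k l Hkl.
  have E1 := congr1 (fun p => nat_of_ord p.1) Hkl; rewrite /= !Hf1 in E1.
  have E2 := congr1 (fun p => nat_of_ord p.2) Hkl; rewrite /= !Hf2 in E2.
  by apply: val_inj; rewrite /= -(Hidx k) -(Hidx l) E1 E2.
- apply/forallP => k; apply/forallP => l; apply/implyP; rewrite !Hf1 !Hf2.
  move=> /andP [H1 H2].
  rewrite -(Hidx k) -(Hidx l).
  move: H1; rewrite leq_eqVlt => /orP [/eqP E|H1].
    by rewrite E leq_add2l.
  have [Hr Hc] := Hin k.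
  by apply: ltnW; apply: idx_mono.
Qed.

End P1.

Section C.
Local Open Scope ring_scope.
Local Open Scope complex_scope.
Variable R : realType.

Definition gz (z z' : R[i]) (j i : nat) := (z + j%:R - i%:R) * (z' + j%:R - i%:R).
Definition Bz (z z' : R[i]) (la : seq nat) :=
  \prod_(i < size la) \prod_(j < nth 0%N la i) gz z z' j i.

Lemma MzzE (z z' : R[i]) la : Mzz z z' la = Bz z z' la / poch (z * z') (sumn la)
   * ((dim_part la) ^ 2)%:R / ((sumn la)`!)%:R.
Proof. by []. Qed.

Lemma lin_neq0 (z : R[i]) (j i : nat) : ~ is_integer z -> z + j%:R - i%:R != 0.
Proof.
move=> Hz; apply/eqP => H; apply: Hz; exists (Posz i - Posz j).
have -> : z = (z + j%:R - i%:R) + i%:R - j%:R by ring.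
by rewrite H intrB add0r.
Qed.

Lemma gz_neq0 (z z' : R[i]) j i : ~ is_integer z -> ~ is_integer z' -> gz z z' j i != 0.
Proof. by move=> Hz Hz'; rewrite mulf_neq0 // lin_neq0. Qed.

Lemma Bz_neq0 (z z' : R[i]) la : ~ is_integer z -> ~ is_integer z' -> Bz z z' la != 0.
Proof.
move=> Hz Hz'; apply: (big_ind (fun x : R[i] => x != 0)) => //; first exact: oner_neq0.
  by move=> x y Hx Hy; rewrite mulf_neq0.
move=> i _; apply: (big_ind (fun x : R[i] => x != 0)) => //; first exact: oner_neq0.
  by move=> x y Hx Hy; rewrite mulf_neq0.
by move=> j _; apply: gz_neq0.
Qed.

Lemma poch_neq0 (t : R[i]) n : (forall n : nat, t != - n%:R) -> poch t n != 0.
Proof.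
move=> Ht; apply: (big_ind (fun x : R[i] => x != 0)) => //; first exact: oner_neq0.
  by move=> x y Hx Hy; rewrite mulf_neq0.
by move=> k _; rewrite addr_eq0.
Qed.

Lemma Mzz_neq0 (z z' : R[i]) la : ~ is_integer z -> ~ is_integer z' ->
  (forall n : nat, z * z' != - n%:R) -> is_partition la -> Mzz z z' la != 0.
Proof.
move=> Hz Hz' Ht Hla; rewrite MzzE !mulf_neq0 ?invr_eq0 ?Bz_neq0 ?poch_neq0 //.
  by rewrite pnatr_eq0 -lt0n expn_gt0 dim_part_gt0.
by rewrite pnatr_eq0 -lt0n fact_gt0.
Qed.

Lemma Mzz_gt0 (z z' : R[i]) la : is_partition la ->
  (forall j i : nat, 0 < gz z z' j i) -> (forall k : nat, 0 < z * z' + k%:R) ->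
  0 < Mzz z z' la.
Proof.
move=> Hla Hg Ht; rewrite MzzE.
have HB : 0 < Bz z z' la.
  apply: (big_ind (fun x : R[i] => 0 < x)) => [|x y Hx Hy|i _]; first exact: ltr01.
    by rewrite mulr_gt0.
  apply: (big_ind (fun x : R[i] => 0 < x)) => [|x y Hx Hy|j _]; first exact: ltr01.
    by rewrite mulr_gt0.
  exact: Hg.
have HP : 0 < poch (z * z') (sumn la).
  apply: (big_ind (fun x : R[i] => 0 < x)) => [|x y Hx Hy|k _]; first exact: ltr01.
    by rewrite mulr_gt0.
  exact: Ht.
rewrite !(divr_gt0, mulr_gt0) //.
  by rewrite ltr0n expn_gt0 dim_part_gt0.
by rewrite ltr0n fact_gt0.
Qed.

Lemma pos_same_itv (x y : R) (c : int) :
  c%:~R < x < c%:~R + 1 -> c%:~R < y < c%:~R + 1 -> 0 < x * y.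
Proof.
move=> /andP [H1 H2] /andP [H3 H4].
case: (lerP 0 c) => Hc.
  have Hc' : (0 : R) <= c%:~R by rewrite ler0z.
  apply: mulr_gt0; lra.
have Hc' : (c + 1)%:~R <= (0 : R) by rewrite lerz0 lezD1.
rewrite intrD in Hc'.
rewrite nmulr_rgt0; lra.
Qed.

Lemma if_conj (z : R[i]) : ~ is_integer z -> (forall n : nat, z * z^* != - n%:R) ->
  forall la, is_partition la -> 0 < Mzz z z^* la.
Proof.
move=> Hz Ht la Hla; apply: Mzz_gt0 => // [j i|k].
  rewrite /gz.
  have -> : z^* + j%:R - i%:R = (z + j%:R - i%:R)^* by rewrite rmorphB rmorphD /= !conjc_nat.
  rewrite lt_def mulcJ_ge0 andbT mulf_neq0 // ?conjc_eq0 lin_neq0 //.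
rewrite lt_def addr_ge0 ?mulcJ_ge0 ?ler0n // andbT addr_eq0; exact: Ht.
Qed.

Lemma ltC0 (x : R) : (0 < x%:C) = (0 < x).
Proof. by rewrite ltcE /= eqxx. Qed.

Lemma if_real (x y : R) (m : int) : m%:~R < x < m%:~R + 1 -> m%:~R < y < m%:~R + 1 ->
  forall la, is_partition la -> 0 < Mzz x%:C y%:C la.
Proof.
move=> Hx Hy la Hla; apply: Mzz_gt0 => // [j i|k].
  have -> : gz x%:C y%:C j i = ((x + j%:R - i%:R) * (y + j%:R - i%:R))%:C.
    by rewrite /gz rmorphM !rmorphB !rmorphD /= !rmorph_nat.
  rewrite ltC0; apply: (@pos_same_itv _ _ (m + Posz j - Posz i)).
    move: Hx => /andP [H1 H2]; rewrite intrB intrD; apply/andP; split; lra.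
  move: Hy => /andP [H1 H2]; rewrite intrB intrD; apply/andP; split; lra.
have -> : x%:C * y%:C + k%:R = (x * y + k%:R)%:C by rewrite rmorphD rmorphM /= rmorph_nat.
rewrite ltC0; have := pos_same_itv Hx Hy => H.
have : (0 : R) <= k%:R by rewrite ler0n.
lra.
Qed.
End C.

Section E.
Local Open Scope ring_scope.
Variable R : realType.

Lemma prod_pos (A A' T : R) : 0 < A / T -> 0 < A' / T -> 0 < A * A'.
Proof.
move=> H1 H2.
have HT : T != 0 by apply/eqP => HT; rewrite HT invr0 mulr0 ltxx in H1.
have -> : A * A' = (A / T) * (A' / T) * (T * T) by field.
apply: mulr_gt0; first exact: mulr_gt0.
by rewrite lt0r mulf_neq0 //= -expr2 sqr_ge0.
Qed.

Lemma real_final (x y : R) :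
  (forall k : int, x != k%:~R) -> (forall k : int, y != k%:~R) ->
  (forall a b : nat, (0 < a)%N ->
     0 < ((x + a%:R) * (y + a%:R)) / (x * y + (a + b)%:R) /\
     0 < ((x - b.+1%:R) * (y - b.+1%:R)) / (x * y + (a + b)%:R)) ->
  0 < (x * y) / ((x + 2%:R) * (y + 2%:R)) ->
  exists m : int, (m%:~R < x < m%:~R + 1) /\ (m%:~R < y < m%:~R + 1).
Proof.
move=> Hx Hy Hh Hs.
have HN := @archi_boundP _ (`|x| + `|y|) (addr_ge0 (normr_ge0 x) (normr_ge0 y)).
set N := Num.Def.archi_bound _ in HN.
have Nx1 : x <= `|x| := ler_norm x.
have Nx2 : - x <= `|x| by rewrite -normrN ler_norm.
have Ny1 : y <= `|y| := ler_norm y.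
have Ny2 : - y <= `|y| by rewrite -normrN ler_norm.
have HNp : forall a : nat, (0 < a)%N -> 0 < (x + a%:R) * (y + a%:R).
  move=> a Ha; have [H1 H2] := Hh a N Ha.
  have H3 := prod_pos H1 H2.
  have HB : 0 < (x - N.+1%:R) * (y - N.+1%:R).
    rewrite -natr1 nmulr_rgt0; lra.
  by rewrite -(pmulr_lgt0 _ HB).
have HNn : forall b : nat, 0 < (x - b.+1%:R) * (y - b.+1%:R).
  move=> b; have [H1 H2] := Hh N.+1 b (ltn0Sn _).
  have H3 := prod_pos H1 H2.
  have HA : 0 < (x + N.+1%:R) * (y + N.+1%:R).
    rewrite -natr1; apply: mulr_gt0; lra.
  by rewrite -(pmulr_rgt0 _ HA).
have HG : forall c : int, 0 < (x + c%:~R) * (y + c%:~R).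
  case=> [[|n]|n].
  - have H2 := HNp 2%N isT.
    have : 0 < x * y.
      have E : x * y = (x * y) / ((x + 2%:R) * (y + 2%:R)) * ((x + 2%:R) * (y + 2%:R)).
        by rewrite divfK // gt_eqF.
      by rewrite E mulr_gt0.
    by rewrite /= !addr0.
  - exact: HNp.
  - rewrite NegzE intrN; exact: HNn n.
set m := Num.Def.floor x.
have /andP [F1 F2] := floor_itv x; rewrite -/m intrD in F1 F2.
have F1' : m%:~R < x by rewrite lt_neqAle F1 andbT eq_sym Hx.
exists m; split; first by rewrite F1' F2.
have G1 := HG (- m); have G2 := HG (- (m + 1)).
rewrite !intrN intrD in G1 G2.
have [hy|hy|hy] := ltgtP y m%:~R.
- exfalso. have : (x - m%:~R) * (y - m%:~R) < 0 by rewrite pmulr_rlt0; lra.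
  lra.
- have [hy'|hy'|hy'] := ltgtP y (m%:~R + 1).
  + by apply/andP; split.
  + exfalso. have : (x - (m%:~R + 1)) * (y - (m%:~R + 1)) < 0 by rewrite nmulr_rlt0; lra.
    lra.
  + by move: (Hy (m + 1)); rewrite intrD hy' eqxx.
- by move: (Hy m); rewrite hy eqxx.
Qed.
End E.

Section D.
Local Open Scope ring_scope.
Local Open Scope complex_scope.
Variable R : realType.
Variables z z' : R[i].

Lemma Bz_hook a b : Bz z z' (a :: nseq b 1%N) =
  (\prod_(j < a) gz z z' j 0) * \prod_(i < b) gz z z' 0 i.+1.
Proof.
rewrite /Bz /= big_ord_recl /=; congr (_ * _).
rewrite size_nseq; apply: eq_bigr => i _.
rewrite /= nth_nseq ltn_ord big_ord1 /bump /= add1n //.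
Qed.

Lemma poch_S (t : R[i]) n : poch t n.+1 = poch t n * (t + n%:R).
Proof. by rewrite /poch big_ord_recr. Qed.

Lemma hook_part a b : (0 < a)%N -> is_partition (a :: nseq b 1%N).
Proof.
move=> Ha; rewrite /is_partition /= Ha /=.
apply/andP; split.
  case: b => [|b] //=; rewrite Ha /=.
  by elim: b => //.
by elim: b.
Qed.

Lemma Q_pos la : is_partition la -> 0 < Mzz z z' la ->
  0 < Bz z z' la / poch (z * z') (sumn la).
Proof.
move=> Hla; rewrite MzzE -mulrA pmulr_lgt0 //.
by rewrite divr_gt0 // ltr0n ?fact_gt0 // expn_gt0 dim_part_gt0.
Qed.

Hypothesis Hz : ~ is_integer z.
Hypothesis Hz' : ~ is_integer z'.
Hypothesis Ht : forall n : nat, z * z' != - n%:R.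
Hypothesis Hpos : forall la, is_partition la -> 0 < Mzz z z' la.

Lemma hook_ratio a b : (0 < a)%N ->
  0 < gz z z' a 0 / (z * z' + (a + b)%:R) /\ 0 < gz z z' 0 b.+1 / (z * z' + (a + b)%:R).
Proof.
move=> Ha.
have Hsum : forall a b, sumn (a :: nseq b 1%N) = (a + b)%N.
  by move=> a' b'; rewrite /= sumn_nseq mul1n.
have Q0 := Q_pos (hook_part b Ha) (Hpos (hook_part b Ha)).
have Q1 := Q_pos (hook_part b (ltn0Sn a)) (Hpos (hook_part b (ltn0Sn a))).
have Q2 := Q_pos (hook_part b.+1 Ha) (Hpos (hook_part b.+1 Ha)).
have HH := Bz_neq0 (a :: nseq b 1%N) Hz Hz'.
have HP := poch_neq0 (a + b) Ht.
have HT : z * z' + (a + b)%:R != 0 by rewrite addr_eq0.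
rewrite Hsum Bz_hook in Q0; rewrite Hsum Bz_hook in Q1; rewrite Hsum Bz_hook in Q2.
rewrite Bz_hook in HH.
rewrite big_ord_recr /= addSn poch_S in Q1.
rewrite big_ord_recr /= addnS poch_S in Q2.
set H1 := \prod_(j < a) gz z z' j 0 in HH Q0 Q1 Q2.
set H2 := \prod_(i < b) gz z z' 0 i.+1 in HH Q0 Q1 Q2.
set P := poch (z * z') (a + b) in HP Q0 Q1 Q2.
split.
  have -> : gz z z' a 0 / (z * z' + (a + b)%:R) =
    (H1 * gz z z' a 0 * H2 / (P * (z * z' + (a + b)%:R))) / (H1 * H2 / P).
    by field; rewrite HP -natrD HT andbT /=; move: HH; rewrite mulf_eq0 negb_or andbC.
  by apply: divr_gt0.
have -> : gz z z' 0 b.+1 / (z * z' + (a + b)%:R) =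
  (H1 * (H2 * gz z z' 0 b.+1) / (P * (z * z' + (a + b)%:R))) / (H1 * H2 / P).
  by field; rewrite HP -natrD HT andbT /=; move: HH; rewrite mulf_eq0 negb_or andbC.
by apply: divr_gt0.
Qed.

Lemma sq_ratio : 0 < gz z z' 1 1 / gz z z' 2 0.
Proof.
have Q22 := Q_pos (isT : is_partition [:: 2; 2]%N) (Hpos (isT : is_partition [:: 2; 2]%N)).
have Q31 := Q_pos (isT : is_partition [:: 3; 1]%N) (Hpos (isT : is_partition [:: 3; 1]%N)).
have H31 := Bz_neq0 [:: 3; 1]%N Hz Hz'.
have HP := poch_neq0 4 Ht.
rewrite /Bz /= !big_ord_recr !big_ord0 /= !mul1r in Q22 Q31 H31.
change (2 + (2 + 0))%N with 4%N in Q22; change (3 + (1 + 0))%N with 4%N in Q31.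
have G00 := gz_neq0 0 0 Hz Hz'; have G10 := gz_neq0 1 0 Hz Hz'.
have G01 := gz_neq0 0 1 Hz Hz'; have G20 := gz_neq0 2 0 Hz Hz'.
set P := poch _ 4 in HP Q22 Q31.
have -> : gz z z' 1 1 / gz z z' 2 0 =
  (gz z z' 0 0 * gz z z' 1 0 * (gz z z' 0 1 * gz z z' 1 1) / P) /
  (gz z z' 0 0 * gz z z' 1 0 * gz z z' 2 0 * gz z z' 0 1 / P).
  by field; rewrite HP G00 G10 G01 G20.
by apply: divr_gt0.
Qed.

Lemma real_st : (z * z') \is Num.real /\ (z + z') \is Num.real.
Proof.
have [Hu Hw] := hook_ratio 0 (isT : (0 < 1)%N).
have [Hv _] := hook_ratio 0 (isT : (0 < 2)%N).
set t := z * z' in Hu Hw Hv *; set s := z + z'.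
have T1 : t + 1 != 0 by have := Ht 1; rewrite addr_eq0.
have T2 : t + 2%:R != 0 by have := Ht 2; rewrite addr_eq0.
change ((1 + 0)%N%:R) with (1%:R : R[i]) in Hu; change ((1 + 0)%N%:R) with (1%:R : R[i]) in Hw.
change ((2 + 0)%N%:R) with (2%:R : R[i]) in Hv.
set u := gz z z' 1 0 / _ in Hu.
set w := gz z z' 0 1 / _ in Hw.
set v := gz z z' 2 0 / _ in Hv.
have Eu : u * (t + 1) = t + s + 1 by rewrite /u divfK // /gz /t /s; ring.
have Ew : w * (t + 1) = t - s + 1 by rewrite /w divfK // /gz /t /s; ring.
have Ev : v * (t + 2%:R) = t + 2%:R * s + 4%:R by rewrite /v divfK // /gz /t /s; ring.
have E : t * (2%:R * u - v - 1) = 2%:R * v - 2%:R * u - 2%:R.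
  apply/eqP; rewrite -subr_eq0; apply/eqP.
  have -> : t * (2%:R * u - v - 1) - (2%:R * v - 2%:R * u - 2%:R) =
    2%:R * (u * (t + 1) - (t + s + 1)) - (v * (t + 2%:R) - (t + 2%:R * s + 4%:R)) by ring.
  by rewrite Eu Ev !subrr; ring.
clearbody u v w.
have Ureal := gtr0_real Hu; have Vreal := gtr0_real Hv.
have Treal : t \is Num.real.
  have [Hd|Hd] := eqVneq (2%:R * u - v - 1) 0.
    exfalso.
    rewrite Hd mulr0 in E.
    have Hv' : v = 2%:R * u - 1 - (2%:R * u - v - 1) by ring.
    rewrite Hd subr0 in Hv'.
    rewrite Hv' in E.
    have Hu2 : u = 2%:R.
      have H2 : (2%:R : R[i]) * (u - 2%:R) = 0 by rewrite E; ring.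
      by apply/eqP; rewrite -subr_eq0; move/eqP: H2; rewrite mulf_eq0 pnatr_eq0 /=.
    have Hw0 : w * (t + 1) = 0.
      rewrite Ew; have -> : t - s + 1 = 2%:R * (t + 1) - (t + s + 1) by ring.
      by rewrite -Eu Hu2; ring.
    move/eqP: Hw0; rewrite mulf_eq0 (negbTE T1) orbF => /eqP Hw0.
    by rewrite Hw0 ltxx in Hw.
  have -> : t = (2%:R * v - 2%:R * u - 2%:R) / (2%:R * u - v - 1).
    by rewrite -E mulfK.
  by rewrite rpred_div ?rpredB ?rpredM ?rpred_nat ?rpred1.
split => //.
have -> : s = u * (t + 1) - t - 1 by rewrite Eu; ring.
apply: rpredB; last exact: rpred1.
apply: rpredB; last exact: Treal.
apply: rpredM; first exact: Ureal.
apply: rpredD; [exact: Treal | exact: rpred1].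
Qed.

Lemma gzC (x y : R) j i : gz x%:C y%:C j i = ((x + j%:R - i%:R) * (y + j%:R - i%:R))%:C.
Proof. by rewrite /gz rmorphM !rmorphB !rmorphD /= !rmorph_nat. Qed.

Lemma tC (x y : R) n : x%:C * y%:C + n%:R = (x * y + n%:R)%:C.
Proof. by rewrite rmorphD rmorphM /= rmorph_nat. Qed.

Lemma divC (p q : R) : p%:C / q%:C = (p / q)%:C.
Proof. by rewrite fmorph_div. Qed.

Lemma only_if : z' = z^* \/ (z \is Num.real /\ z' \is Num.real /\
     exists m : int, (m%:~R < z < m%:~R + 1) /\ (m%:~R < z' < m%:~R + 1)).
Proof.
have [Treal Sreal] := real_st.
have [a [b Ez]] : exists a b, z = a +i* b by move: (z) => [a b]; exists a, b.
have [a' [b' Ez']] : exists c d, z' = c +i* d by move: (z') => [c d]; exists c, d.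
rewrite Ez Ez' in Treal Sreal.
have {}Sreal : (a + a') +i* (b + b') \is Num.real := Sreal.
have {}Treal : (a * a' - b * b') +i* (a * b' + b * a') \is Num.real := Treal.
rewrite complex_real in Sreal; rewrite complex_real in Treal.
move/eqP: Sreal => Sreal; move/eqP: Treal => Treal.
have Hb' : b' = - b by apply/eqP; rewrite -subr_eq0 opprK addrC Sreal.
rewrite Hb' in Treal.
have : b * (a' - a) = 0 by rewrite -Treal; ring.
move/eqP; rewrite mulf_eq0 => /orP [/eqP Hb0|].
  right.
  have Ezr : z = (a)%:C by rewrite Ez Hb0.
  have Ezr' : z' = (a')%:C by rewrite Ez' Hb' Hb0 oppr0.
  set x := a in Ezr *; set y := a' in Ezr' *.
  split; first by rewrite Ezr complex_real.
  split; first by rewrite Ezr' complex_real.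
  have Hx : forall k : int, x != k%:~R.
    by move=> k; apply/eqP => E; apply: Hz; exists k; rewrite Ezr E rmorph_int.
  have Hy : forall k : int, y != k%:~R.
    by move=> k; apply/eqP => E; apply: Hz'; exists k; rewrite Ezr' E rmorph_int.
  have Hh : forall p q : nat, (0 < p)%N ->
     0 < ((x + p%:R) * (y + p%:R)) / (x * y + (p + q)%:R) /\
     0 < ((x - q.+1%:R) * (y - q.+1%:R)) / (x * y + (p + q)%:R).
    move=> p q Hp; have [H1 H2] := hook_ratio q Hp.
    rewrite Ezr Ezr' !gzC tC divC ltC0 !mulr0n !subr0 in H1.
    by rewrite Ezr Ezr' !gzC tC divC ltC0 !mulr0n !addr0 in H2.
  have Hs : 0 < (x * y) / ((x + 2%:R) * (y + 2%:R)).
    have := sq_ratio; rewrite Ezr Ezr' !gzC divC ltC0.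
    by rewrite !addrK !mulr0n !subr0.
  have [m [Hmx Hmy]] := real_final Hx Hy Hh Hs.
  exists m.
  have E1 : (m%:~R : R[i]) + 1 = (m%:~R + 1)%:C by rewrite rmorphD rmorph1 rmorph_int.
  have E2 : (m%:~R : R[i]) = (m%:~R)%:C by rewrite rmorph_int.
  by rewrite Ezr Ezr' E1 E2 !ltcR.
rewrite subr_eq0 => /eqP Ha.
left; rewrite Ez' Ez Hb' Ha.
by [].
Qed.
End D.

Section Main.
Local Open Scope ring_scope.
Local Open Scope complex_scope.
Unset Implicit Arguments.

Theorem proposition2p2 (R : realType) (z z' : R[i]) :
  ~ is_integer z -> ~ is_integer z' ->
  (forall n : nat, z * z' != - n%:R) ->
  (forall la : seq nat, is_partition la -> Mzz z z' la != 0) /\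
  ((forall la : seq nat, is_partition la -> 0 < Mzz z z' la) <->
   (z' = z^* \/
    (z \is Num.real /\ z' \is Num.real /\
     exists m : int, (m%:~R < z < m%:~R + 1) /\ (m%:~R < z' < m%:~R + 1)))).
Proof.
move=> Hz Hz' Ht; split; first by move=> la; apply: Mzz_neq0.
split; first by move=> Hpos; apply: only_if.
case=> [Ez'|[Hr [Hr' [m [H1 H2]]]]].
  by rewrite Ez' in Ht *; apply: if_conj.
move/complex_realP: Hr => [x Ex]; move/complex_realP: Hr' => [y Ey].
have E1 : (m%:~R : R[i]) + 1 = (m%:~R + 1)%:C by rewrite rmorphD rmorph1 rmorph_int.
have E2 : (m%:~R : R[i]) = (m%:~R)%:C by rewrite rmorph_int.
rewrite Ex E1 E2 !ltcR in H1; rewrite Ey E1 E2 !ltcR in H2.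
by rewrite Ex Ey; apply: (if_real H1 H2).
Qed.
End Main.
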